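(* Let $(X,Y)$ and $(\tilde X,\tilde Y)$ be random pairs on finite sets $\mathcal X\times\mathcal Y$ and suppose $D_{\chi^2}(P_{\tilde Y,\tilde X}\|P_{Y,X})\le\beta^2$. Then $P_{\tilde X}(x)=P_X(x)+O(\beta)$ for all $x\in\mathcal X$, and $P_{\tilde Y\mid\tilde X}(y\mid x)=P_{Y\mid X}(y\mid x)+O(\beta)$ for all $x\in\mathcal X$, $y\in\mathcal Y$. In addition, if $H_L(\tilde Y;Y\mid\tilde X)$ is bounded, then $H_L(\tilde Y;Y\mid\tilde X)=H_L(Y\mid X)+O(\beta)$.
   Context: Neyman's $\chi^2$-divergence: $D_{\chi^2}(P\|Q)=\sum_z(P(z)-Q(z))^2/Q(z)$. For a loss $L:\mathcal Y\times\mathcal A\to\mathbb R$: $H_L(Y\mid X=x)=\min_{a\in\mathcal A}\mathbb E_{Y\sim P_{Y\mid X=x}}[L(Y,a)]$ with minimizer (Bayes action) $a_{P_{Y\mid X=x}}$, and $H_L(Y\mid X)=\sum_xP_X(x)H_L(Y\mid X=x)$, assumed bounded. The generalized conditional cross entropy is $H_L(\tilde Y;Y\mid\tilde X=x)=\mathbb E_{Y\sim P_{\tilde Y\mid\tilde X=x}}[L(Y,a_{P_{Y\mid X=x}})]$ and $H_L(\tilde Y;Y\mid\tilde X)=\sum_xP_{\tilde X}(x)H_L(\tilde Y;Y\mid\tilde X=x)$. $O(\beta)$ is as $\beta\to0$. *)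

(* Defs.v *)
From HB Require Import structures.
From mathcomp Require Import all_boot all_order all_algebra.
From mathcomp Require Import reals constructive_ereal.
Set Implicit Arguments. Unset Strict Implicit. Unset Printing Implicit Defensive.
Import Order.TTheory GRing.Theory Num.Theory.
Local Open Scope ring_scope.

Section Defs.
Variables (R : realType) (X Y : finType).

Definition isdist (T : finType) (P : T -> R) : Prop :=
  (forall z, 0 <= P z) /\ \sum_(z : T) P z = 1.

Definition chi2 (T : finType) (P Q : T -> R) : \bar R :=
  if [forall z, (Q z == 0) ==> (P z == 0)]
  then (\sum_(z | Q z != 0) (P z - Q z) ^+ 2 / Q z)%:E
  else +oo%E.

Definition marg (P : Y * X -> R) (x : X) : R := \sum_(y : Y) P (y, x).

Definition cond (P : Y * X -> R) (x : X) (y : Y) : R := P (y, x) / marg P x.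

Definition eloss (A : Type) (L : Y -> A -> R) (q : Y -> R) (a : A) : R :=
  \sum_(y : Y) q y * L y a.

(* act q is the Bayes action for the distribution q (a minimizer, assumed to
   exist); H_L(Y | X = x) = E_{P_{Y|X=x}}[L(Y, a_{P_{Y|X=x}})] and
   H_L(Y | X) = sum_x P_X(x) H_L(Y | X = x). *)
Definition HL (A : Type) (L : Y -> A -> R) (act : (Y -> R) -> A)
  (P : Y * X -> R) : R :=
  \sum_(x : X) marg P x * eloss L (cond P x) (act (cond P x)).

Definition HLcross (A : Type) (L : Y -> A -> R) (act : (Y -> R) -> A)
  (Pt P : Y * X -> R) : R :=
  \sum_(x : X) marg Pt x * eloss L (cond Pt x) (act (cond P x)).

End Defs.

(* Main.v *)
Require Import Defs.
From HB Require Import structures.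
From mathcomp Require Import all_boot all_order all_algebra.
From mathcomp Require Import reals constructive_ereal ring lra.
Import Order.TTheory GRing.Theory Num.Theory.
Local Open Scope ring_scope.

Lemma le_term (R : realType) (T : finType) (F : T -> R) (P : pred T) z :
  (forall i, P i -> 0 <= F i) -> P z -> F z <= \sum_(i | P i) F i.
Proof.
move=> F0 Pz; rewrite (bigD1 z) //= lerDl; apply: sumr_ge0 => i /andP[Pi _].
exact: F0.
Qed.

Lemma absdiff (R : realType) (T : finType) (P Pt : T -> R) (b : R) :
  isdist P -> 0 < b -> (chi2 Pt P <= (b^+2)%:E)%E ->
  forall z, `|Pt z - P z| <= b.
Proof.
move=> [P0 P1] b0; rewrite /chi2; case: ifP => [/forallP H|]; last first.
  by rewrite leye_eq.
rewrite lee_fin => Hs z.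
have [Pz|Pz] := eqVneq (P z) 0.
  by move/implyP: (H z) => /(_ (introT eqP Pz)) /eqP ->; rewrite Pz subrr normr0 ltW.
have Pzp : 0 < P z by rewrite lt0r Pz P0.
have Hle1 : P z <= 1 by rewrite -P1 (le_term _ _ _ xpredT).
have : (Pt z - P z) ^+ 2 / P z <= b ^+ 2.
  apply: le_trans Hs; apply: (le_term _ _ _ (fun z => P z != 0)) => // i _.
  by apply: divr_ge0; [apply: sqr_ge0| apply: P0].
rewrite ler_pdivrMr // => Hd.
have Hd2 : (Pt z - P z) ^+ 2 <= b ^+ 2 by apply: le_trans Hd _; rewrite ler_piMr ?sqr_ge0.
have := Hd2; rewrite -real_normK ?num_real // => Hd3.
have := normr_ge0 (Pt z - P z); move: Hd3; move: (`|Pt z - P z|) => d.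
move=> Hd3 dp; nra.
Qed.

Lemma marg_diff (R : realType) (X Y : finType) (P Pt : Y * X -> R) b :
  (forall z, `|Pt z - P z| <= b) -> forall x,
  `|marg Pt x - marg P x| <= #|Y|%:R * b.
Proof.
move=> H x; rewrite /marg -sumrB.
apply: le_trans (ler_norm_sum _ _ _) _.
apply: le_trans (ler_sum _ (fun y _ => H (y, x))) _.
by rewrite sumr_const mulr_natl.
Qed.

Lemma marg_cond (R : realType) (X Y : finType) (Q : Y * X -> R) x y :
  (forall z, 0 <= Q z) -> marg Q x * cond Q x y = Q (y, x).
Proof.
move=> Q0; rewrite /cond.
have [m0|m0] := eqVneq (marg Q x) 0.
  rewrite m0 mul0r; symmetry.
  by apply: (psumr_eq0P (P := xpredT) (F := fun y => Q (y, x))) => // i _.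
by rewrite mulrCA divff // mulr1.
Qed.

Lemma marg_eloss (R : realType) (X Y : finType) (A : Type) (L : Y -> A -> R)
  (Q : Y * X -> R) x a :
  (forall z, 0 <= Q z) -> marg Q x * eloss L (cond Q x) a = \sum_y Q (y, x) * L y a.
Proof.
move=> Q0; rewrite /eloss mulr_sumr; apply: eq_bigr => y _.
by rewrite mulrA marg_cond.
Qed.

Lemma marg_ge0 (R : realType) (X Y : finType) (Q : Y * X -> R) x :
  (forall z, 0 <= Q z) -> 0 <= marg Q x.
Proof. by move=> Q0; apply: sumr_ge0. Qed.

Lemma le_marg (R : realType) (X Y : finType) (Q : Y * X -> R) x y :
  (forall z, 0 <= Q z) -> Q (y, x) <= marg Q x.
Proof. by move=> Q0; apply: (le_term _ _ (fun y => Q (y, x)) xpredT). Qed.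

Arguments absdiff {R T P Pt b}.
Arguments marg_diff {R X Y P Pt b}.
Arguments marg_eloss {R X Y A L Q x a}.
Arguments le_marg {R X Y Q x y}.

Theorem lemma2 (R : realType) (X Y : finType) (A : Type)
  (L : Y -> A -> R) (act : (Y -> R) -> A) (P : Y * X -> R) :
  isdist P ->
  (forall x : X, 0 < marg P x ->
     forall a : A, eloss L (cond P x) (act (cond P x)) <= eloss L (cond P x) a) ->
  (forall x : X, exists C : R, exists beta0 : R, 0 < beta0 /\
     forall (beta : R) (Pt : Y * X -> R), 0 < beta <= beta0 -> isdist Pt ->
       (chi2 Pt P <= (beta ^+ 2)%:E)%E ->
       `|marg Pt x - marg P x| <= C * beta)
  /\
  (forall (x : X) (y : Y), 0 < marg P x ->
     exists C : R, exists beta0 : R, 0 < beta0 /\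
     forall (beta : R) (Pt : Y * X -> R), 0 < beta <= beta0 -> isdist Pt ->
       (chi2 Pt P <= (beta ^+ 2)%:E)%E ->
       `|cond Pt x y - cond P x y| <= C * beta)
  /\
  (exists C : R, exists beta0 : R, 0 < beta0 /\
     forall (beta : R) (Pt : Y * X -> R), 0 < beta <= beta0 -> isdist Pt ->
       (chi2 Pt P <= (beta ^+ 2)%:E)%E ->
       `|HLcross L act Pt P - HL L act P| <= C * beta).
Proof.
move=> Pd _; have P0 := Pd.1.
split; [|split].
- move=> x; exists #|Y|%:R, 1; split => // b Pt /andP[b0 _] _ Hc.
  exact: marg_diff (absdiff Pd b0 Hc) x.
- move=> x y m0; set m := marg P x; set N : R := #|Y|%:R.
  have N0 : 0 <= N by rewrite /N ler0n.
  exists (2 * (1 + N) / m), (m / (2 * (N + 1))); split.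
    by rewrite divr_gt0 // mulr_gt0 // ltr_wpDl.
  move=> b Pt /andP[b0 bb] [Pt0 _] Hc.
  have Hz := absdiff Pd b0 Hc.
  have hb : b * (2 * (N + 1)) <= m by rewrite -ler_pdivlMr // mulr_gt0 // ltr_wpDl.
  have := marg_diff Hz x; rewrite -/N -/m; set mt := marg Pt x.
  rewrite ler_norml => /andP[h1 h2].
  have mt2 : m / 2 <= mt by nra.
  have mtp : 0 < mt by lra.
  rewrite /cond -/m -/mt.
  set a := Pt (y, x); set c := P (y, x).
  have c0 : 0 <= c by apply: P0.
  have cm : c <= m by apply: le_marg.
  have hac : `|a - c| <= b := Hz (y, x).
  have -> : a / mt - c / m = ((a - c) * m + c * (m - mt)) / (mt * m).
    by field; apply/andP; split; apply: lt0r_neq0.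
  rewrite normrM normfV (ger0_norm (x := mt * m)); last by rewrite mulr_ge0 // ltW.

  rewrite ler_pdivrMr ?mulr_gt0 //.
  have -> : 2 * (1 + N) / m * b * (mt * m) = 2 * (1 + N) * b * mt.
    by field; apply: lt0r_neq0.
  apply: le_trans (ler_normD _ _) _.
  rewrite !normrM (ger0_norm (ltW m0)) (ger0_norm c0).
  have hmm : `|m - mt| <= N * b by rewrite ler_norml; apply/andP; split; lra.
  have e1 : `|a - c| * m <= b * m by rewrite ler_wpM2r // ltW.
  have e2 : c * `|m - mt| <= m * (N * b) by apply: ler_pM.
  have e3 : (1 + N) * b * m <= 2 * (1 + N) * b * mt.
    have : 0 <= (1 + N) * b by apply: mulr_ge0; [apply: addr_ge0 | apply: ltW].
    move=> k0; have : (1 + N) * b * m <= (1 + N) * b * (2 * mt).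
      by apply: ler_wpM2l => //; lra.
    lra.
  rewrite -/m.
  nra.
- exists (\sum_x \sum_y `|L y (act (cond P x))|), 1; split => // b Pt /andP[b0 _] [Pt0 _] Hc.
  have Hz := absdiff Pd b0 Hc.
  rewrite /HLcross /HL -sumrB.
  under eq_bigr => x _ do rewrite (marg_eloss Pt0) (marg_eloss P0) -sumrB.
  rewrite mulr_suml; apply: le_trans (ler_norm_sum _ _ _) _; apply: ler_sum => x _.
  rewrite mulr_suml; apply: le_trans (ler_norm_sum _ _ _) _; apply: ler_sum => y _.
  rewrite -mulrBl normrM mulrC; apply: ler_wpM2l => //.
Qed.
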